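(* Let $k\geq2$ be even, $n>2\ell'_k$, and $p\in\{0,1,2\}^{[\![1,n]\!]^2}$. Let $K^A(p,\ell'_k)=\{v\in J^A(p,\ell'_k):p(v)=0\}$ and $K^B(p,\ell'_k)=\{v\in J^B(p,\ell'_k):p(v)=0\}$. Then (1) $\mathrm{card}(K^B(p,\ell'_k))\leq(1-N_{k-1}^{-1})^{-1}\,\mathrm{card}(J^B(p,\ell'_k))\,f^B_{k-1}$; (2) $\mathrm{card}(K^A(p,\ell'_k))\leq\frac{2}{N'_k}\,\mathrm{card}(J^A(p,\ell'_k))\,f^A_{k-1}$.
   Context: Alphabet $\{0,1,2\}$. Let $(N_k)_{k\geq1}$ be integers with $N_k\geq4$, $\ell_0=2$, $\ell_k=N_k\ell_{k-1}$; let $N'_k\geq2$ be integers dividing $N_k$ with $N_k/N'_k\geq2$, and $\ell'_k=N'_k\ell_{k-1}$. Words: $a_0=01$, $b_0=02$; for odd $k\geq1$, $a_k=(a_{k-1})^{N_k}$ and $b_k=b_{k-1}2^{(N_k-2)\ell_{k-1}}b_{k-1}$; for even $k\geq2$, $a_k=a_{k-1}1^{(N_k-2)\ell_{k-1}}a_{k-1}$ and $b_k=(b_{k-1})^{N_k}$. $f^A_k$ (resp. $f^B_k$) is the number of occurrences of the symbol $0$ in $a_k$ (resp. $b_k$) divided by $\ell_k$. For even $k$: $\widetilde A'_k=\{a_{k-1}1^{(N'_k-1)\ell_{k-1}},\,1^{(N'_k-1)\ell_{k-1}}a_{k-1},\,1^{\ell'_k}\}$ and $\widetilde B'_k=\{(b_{k-1})^{N'_k},2^{\ell'_k}\}$.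 $\widetilde{\widetilde A}'_k$ (resp. $\widetilde{\widetilde B}'_k$) is the set of patterns $q\in\{0,1,2\}^{[\![1,\ell'_k]\!]^2}$ with $q(i,j)=\widetilde q(i)$ for all $(i,j)$, for some $\widetilde q\in\widetilde A'_k$ (resp. $\widetilde B'_k$). With $\sigma^u(p)(v)=p(u+v)$: $I^A(p,\ell'_k)=\{u\in[\![0,n-\ell'_k]\!]^2:(\sigma^up)|_{[\![1,\ell'_k]\!]^2}\in\widetilde{\widetilde A}'_k\}$, $J^A(p,\ell'_k)=\bigcup_{u\in I^A(p,\ell'_k)}(u+[\![1,\ell'_k]\!]^2)$, and $I^B,J^B$ analogously with $\widetilde{\widetilde B}'_k$. *)

(* Defs.v *)
From mathcomp Require Import all_boot all_order all_algebra.
Set Implicit Arguments. Unset Strict Implicit. Unset Printing Implicit Defensive.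
Import Order.TTheory GRing.Theory Num.Theory.

Fixpoint ell (N : nat -> nat) (k : nat) : nat :=
  match k with 0 => 2 | k'.+1 => N k'.+1 * ell N k' end.

Definition ell' (N N' : nat -> nat) (k : nat) : nat := N' k * ell N k.-1.

Fixpoint words (N : nat -> nat) (k : nat) : seq nat * seq nat :=
  match k with
  | 0 => ([:: 0; 1], [:: 0; 2])
  | k'.+1 =>
      let: (a, b) := words N k' in
      let Nk := N k'.+1 in
      let l := ell N k' in
      if odd k'.+1 then (flatten (nseq Nk a), b ++ nseq ((Nk - 2) * l) 2 ++ b)
      else (a ++ nseq ((Nk - 2) * l) 1 ++ a, flatten (nseq Nk b))
  end.

Definition wa N k := (words N k).1.
Definition wb N k := (words N k).2.

Definition fA (N : nat -> nat) (k : nat) : rat :=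
  ((count_mem 0 (wa N k))%:R / (ell N k)%:R)%R.
Definition fB (N : nat -> nat) (k : nat) : rat :=
  ((count_mem 0 (wb N k))%:R / (ell N k)%:R)%R.

Definition At' (N N' : nat -> nat) (k : nat) : seq (seq nat) :=
  let a := wa N k.-1 in let l := ell N k.-1 in
  [:: a ++ nseq ((N' k - 1) * l) 1; nseq ((N' k - 1) * l) 1 ++ a;
      nseq (ell' N N' k) 1].
Definition Bt' (N N' : nat -> nat) (k : nat) : seq (seq nat) :=
  let b := wb N k.-1 in
  [:: flatten (nseq (N' k) b); nseq (ell' N N' k) 2].

(* Patterns p on [[1,n]]^2 are functions p : nat -> nat -> nat (1-based
   coordinates); only their values on [[1,n]]^2 matter.
   (sigma^u p)|_{[[1,l]]^2} is the pattern q with q(i,j) = qt(i) for some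
   qt in W (a word of length l). *)
Definition matches (p : nat -> nat -> nat) (u : nat * nat) (l : nat)
    (W : seq (seq nat)) : bool :=
  has (fun qt => (size qt == l) &&
        [forall i : 'I_l, forall j : 'I_l,
           p (u.1 + i.+1) (u.2 + j.+1) == nth 0 qt i]) W.

(* I(p,l) as a set of points u in [[0,n-l]]^2, coded in 'I_n.+1 ^2 *)
Definition Iset (n : nat) (p : nat -> nat -> nat) (l : nat)
    (W : seq (seq nat)) : {set 'I_n.+1 * 'I_n.+1} :=
  [set u : 'I_n.+1 * 'I_n.+1 |
     [&& (u.1 : nat) <= n - l, (u.2 : nat) <= n - l & matches p (val u.1, val u.2) l W]].

Definition Jset (n : nat) (p : nat -> nat -> nat) (l : nat)
    (W : seq (seq nat)) : {set 'I_n.+1 * 'I_n.+1} :=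
  [set w : 'I_n.+1 * 'I_n.+1 | [exists u in Iset n p l W,
     [&& (u.1 : nat) < w.1 <= u.1 + l & (u.2 : nat) < w.2 <= u.2 + l]]].

Definition Kset (n : nat) (p : nat -> nat -> nat) (l : nat)
    (W : seq (seq nat)) : {set 'I_n.+1 * 'I_n.+1} :=
  [set w in Jset n p l W | p w.1 w.2 == 0].

(* Main.v *)
Require Import Defs.
From mathcomp Require Import all_boot all_order all_algebra.
From mathcomp Require Import zify ring lra.
Import Order.TTheory GRing.Theory Num.Theory.


Lemma size_flat_nseq (T : Type) m (s : seq T) : size (flatten (nseq m s)) = m * size s.
Proof. elim: m => [|m IH] //=; by rewrite size_cat IH mulSn. Qed.

Lemma flat_nseqS (T : Type) m (s : seq T) : flatten (nseq m.+1 s) = flatten (nseq m s) ++ s.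
Proof. elim: m => [|m IH] /=; first by rewrite cats0. by rewrite -catA -IH. Qed.

Lemma nth_flat_nseq (T : Type) (x0 : T) m (s : seq T) j i : j < m -> i < size s ->
  nth x0 (flatten (nseq m s)) (j * size s + i) = nth x0 s i.
Proof.
elim: m j => [|m IH] [|j] //= hj hi; rewrite nth_cat.
  by rewrite mul0n add0n hi.
rewrite mulSn -addnA ltnNge leq_addr /= addKn; exact: IH.
Qed.

Section W.
Variable N : nat -> nat.
Hypothesis hN : forall j, 1 <= j -> 4 <= N j.

Lemma words_facts k :
  [/\ size (wa N k) = ell N k, size (wb N k) = ell N k,
      exists a1, wa N k = 0 :: a1, exists a0, wa N k = a0 ++ [:: 0; 1]
    & exists b1, wb N k = 0 :: b1].
Proof.
elim: k => [|k [sa sb [a1 ea1] [a0 ea0] [b1 eb1]]].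
  by split => //; [exists [:: 1] | exists [::] | exists [:: 2]].
have hk := hN (k.+1) isT.
rewrite /wa /wb /= in sa sb ea1 ea0 eb1 *.
case: (words N k) sa sb ea1 ea0 eb1 => a b /= sa sb ea1 ea0 eb1.
case: ifP => _ /=.
- split.
  + by rewrite size_flat_nseq sa.
  + rewrite !size_cat size_nseq sb; lia.
  + case: (N k.+1) hk => [|m] // _; rewrite /= ea1; by eexists.
  + case: (N k.+1) hk => [|m] // _; rewrite flat_nseqS ea0 catA; by eexists.
  + rewrite eb1; by eexists.
- split.
  + rewrite !size_cat size_nseq sa; lia.
  + by rewrite size_flat_nseq sb.
  + rewrite ea1; by eexists.
  + rewrite {2}ea0 !catA; by eexists.
  + case: (N k.+1) hk => [|m] // _; rewrite /= eb1; by eexists.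
Qed.

Lemma wb_odd k : odd k.+1 ->
  wb N k.+1 = wb N k ++ nseq ((N k.+1 - 2) * ell N k) 2 ++ wb N k.
Proof. by rewrite /wb /=; case: (words N k) => a b /= ->. Qed.

Lemma wa_odd k : odd k.+1 -> wa N k.+1 = flatten (nseq (N k.+1) (wa N k)).
Proof. by rewrite /wa /=; case: (words N k) => a b /= ->. Qed.

End W.
Definition copies n (p : nat -> nat -> nat) L W (w : seq nat) M (l : nat) : {set 'I_n.+1 * 'I_n.+1} :=
 [set c : 'I_n.+1 * 'I_n.+1 | [exists u in Iset n p L W, [exists j : 'I_M,
    [&& (c.1 : nat) == u.1 + j * l, matches p (val u.1, val u.2) L [:: w]
      & (u.2 < c.2 <= u.2 + L)]]]].

Lemma matches_cons p u l w W : matches p u l (w :: W) = matches p u l [:: w] || matches p u l W.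
Proof. by rewrite /matches /= orbF. Qed.

Lemma matches3 p u l x y z : matches p u l [:: x; y; z] =
  [|| matches p u l [:: x], matches p u l [:: y] | matches p u l [:: z]].
Proof. by rewrite /matches /= !orbF. Qed.

Lemma matches1P p u l w : matches p u l [:: w] ->
  size w = l /\ forall i j, i < l -> j < l -> p (u.1 + i.+1) (u.2 + j.+1) = nth 0 w i.
Proof.
rewrite /matches /= orbF => /andP [/eqP hs /forallP h]; split => // i j hi hj.
by have /forallP /(_ (Ordinal hj)) /eqP := h (Ordinal hi).
Qed.
Arguments matches1P {p u l w}.

Lemma copy_prop n p L W w M v c : L <= n -> M * size v = L ->
  (forall j i, j < M -> i < size v -> nth 0 w (j * size v + i) = nth 0 v i) ->
  c \in copies n p L W w M (size v) ->
  [/\ c.1 + size v <= n,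
      forall i, i < size v -> p (c.1 + i.+1) c.2 = nth 0 v i
    & forall i, i < size v -> (inord (c.1 + i.+1), c.2) \in Jset n p L W].
Proof.
move=> hL hM hv; case: c => x y; rewrite inE => /existsP [[u1 u2] /andP [hu /existsP [j /and3P [/eqP hc hm hy]]]].
rewrite /= in hc hy.
have := hu; rewrite inE => /and3P [hu1 hu2 _].
have [_ hmm] := matches1P hm.
rewrite /= in hu1 hu2 hmm.
have hj := ltn_ord j.
have hjl : j * size v + size v <= L by rewrite -hM; nia.
split.
- rewrite /=; lia.
- move=> i hi; rewrite hc /=.
  have -> : (y : nat) = u2 + (y - u2 - 1).+1 by lia.
  rewrite -addnA addnS hmm; [exact: hv | lia | lia].
- move=> i hi; rewrite inE; apply/existsP; exists (u1, u2); rewrite hu /=.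
  rewrite inordK; last lia.
  apply/andP; split; apply/andP; split; lia.
Qed.

Lemma in_copies n p L W w M l u (y : 'I_n.+1) (j : nat) : u \in Iset n p L W ->
  matches p (val u.1, val u.2) L [:: w] -> u.2 < y <= u.2 + L -> j < M -> u.1 + j * l <= n ->
  ((inord (u.1 + j * l) : 'I_n.+1), y) \in copies n p L W w M l.
Proof.
move=> hu hm hy hj hn; rewrite inE; apply/existsP; exists u; rewrite hu /=.
apply/existsP; exists (Ordinal hj); rewrite /= inordK; first by rewrite eqxx /=; apply/andP; split; [exact: hm | exact: hy].
move: hn; case: u {hu hm hy} => u1 u2 /=; lia.
Qed.

Lemma cover n p L W w M (v : seq nat) (w0 : 'I_n.+1 * 'I_n.+1) u : L <= n -> M * size v = L ->
  u \in Iset n p L W -> matches p (val u.1, val u.2) L [:: w] ->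
  u.1 < w0.1 <= u.1 + L -> u.2 < w0.2 <= u.2 + L ->
  exists c i, [/\ c \in copies n p L W w M (size v), i < size v
     & w0 = (inord (c.1 + i.+1), c.2)].
Proof.
move=> hL hM hu hm hx hy.
have := hu; rewrite inE => /and3P [hu1 hu2 _].
case: u hu hm hx hy hu1 hu2 => u1 u2 hu hm /= hx hy hu1 hu2.
have hv0 : 0 < size v by case: (size v) hM => //; rewrite muln0; lia.
set i0 := w0.1 - u1 - 1.
have hi0 : i0 < M * size v by rewrite hM; lia.
have hj : i0 %/ size v < M by rewrite ltn_divLR.
have hdec := divn_eq i0 (size v).
have hmod : i0 %% size v < size v by rewrite ltn_mod.
have hjl : (i0 %/ size v) * size v + size v <= L by rewrite -hM; nia.
exists ((inord (u1 + (i0 %/ size v) * size v)), w0.2), (i0 %% size v).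
split => //.
- apply: (in_copies n p L W w M (size v) (u1,u2) w0.2 (i0 %/ size v) hu hm hy hj); rewrite /=; lia.
- move: hx hy hi0 hj hdec hmod hjl; rewrite /i0; case: w0 {i0} => x y /= hx hy hi0 hj hdec hmod hjl.
  congr pair; apply: val_inj; rewrite /= !inordK; lia.
Qed.

Lemma cnt (T : eqType) (x0 : T) (a : pred T) (w : seq T) :
  #|[set i : 'I_(size w) | a (nth x0 w i)]| = count a w.
Proof.
rewrite -sum1_count (big_nth x0) big_mkord -sum1_card.
by apply: eq_bigl => i; rewrite inE.
Qed.

Definition gpt n (ci : ('I_n.+1 * 'I_n.+1) * nat) : 'I_n.+1 * 'I_n.+1 :=
  (inord (ci.1.1 + ci.2.+1), ci.1.2).
Arguments gpt {n}.

Lemma zero_count n (C : {set 'I_n.+1 * 'I_n.+1}) (v : seq nat) :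
  #|[set gpt (ci.1, val ci.2) | ci in setX C [set i : 'I_(size v) | nth 0 v i == 0]]|
    <= #|C| * count_mem 0 v.
Proof.
apply: leq_trans (leq_imset_card _ _) _.
by rewrite cardsX (cnt _ 0 (pred1 0)).
Qed.

Lemma inj_count n (C : {set 'I_n.+1 * 'I_n.+1}) d :
  (forall c, c \in C -> c.1 + d <= n) ->
  (forall c c', c \in C -> c' \in C -> c.2 = c'.2 -> c.1 < c'.1 -> c'.1 < c.1 + d -> False) ->
  #|[set gpt (ci.1, val ci.2) | ci in setX C [set: 'I_d]]| = #|C| * d.
Proof.
move=> hC hD; rewrite card_in_imset ?cardsX ?cardsT ?card_ord //.
move=> [[x y] i] [[x' y'] i']; rewrite !inE /= => /andP [hc _] /andP [hc' _].
rewrite /gpt /= => [[e1 e2]]; subst y'.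
have h1 := hC _ hc; have h2 := hC _ hc'; rewrite /= in h1 h2.
have hi := ltn_ord i; have hi' := ltn_ord i'.
have := congr1 val e1; rewrite /= !inordK; [|lia|lia] => e.
case: (ltngtP x x') => hx.
- exfalso; apply: (hD _ _ hc hc') => //=; lia.
- exfalso; apply: (hD _ _ hc' hc) => //=; lia.
- have ex : x = x' by apply: val_inj.
  subst x'; have ei : i = i' by apply: val_inj => /=; lia.
  by subst i'.
Qed.

Lemma nthB2 (b : seq nat) M j : size b <= j < size b + M -> nth 0 (b ++ nseq M 2 ++ b) j = 2.
Proof.
move=> /andP [h1 h2]; rewrite nth_cat ltnNge h1 /= nth_cat size_nseq.
have -> : j - size b < M by lia.
by rewrite nth_nseq; case: ifP => //; lia.
Qed.

Lemma nthB0 (b : seq nat) M : nth 0 (b ++ nseq M 2 ++ b) (size b + M) = nth 0 b 0.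
Proof.
rewrite nth_cat ltnNge leq_addr /= addKn nth_cat size_nseq ltnn subnn //.
Qed.

Lemma disjB (b : seq nat) M (f : nat -> nat) s s' :
  nth 0 b 0 = 0 -> 0 < size b -> size b <= M ->
  (forall i, i < size (b ++ nseq M 2 ++ b) -> f (s + i.+1) = nth 0 (b ++ nseq M 2 ++ b) i) ->
  (forall i, i < size (b ++ nseq M 2 ++ b) -> f (s' + i.+1) = nth 0 (b ++ nseq M 2 ++ b) i) ->
  s < s' -> s' < s + (size b + M) -> False.
Proof.
move=> hb0 hb hM hs hs' h1 h2.
have sz : size (b ++ nseq M 2 ++ b) = size b + M + size b by rewrite !size_cat size_nseq addnA.
have e0 : f s'.+1 = 0.
  rewrite -addn1 hs'; last by rewrite sz; lia.
  by rewrite nth_cat hb hb0.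
have e1 : f s'.+1 = nth 0 (b ++ nseq M 2 ++ b) (s' - s).
  rewrite -hs; [congr f; lia | rewrite sz; lia].
have hi : s' - s < size b.
  rewrite ltnNge; apply/negP => hh.
  by move: e1; rewrite e0 nthB2 //; apply/andP; split; lia.
have e2 : f (s + (size b + M).+1) = 0.
  by rewrite hs ?nthB0 // sz; lia.
have e3 : f (s + (size b + M).+1) = nth 0 (b ++ nseq M 2 ++ b) (size b + M - (s' - s)).
  rewrite -hs'; [congr f; lia | rewrite sz; lia].
by move: e3; rewrite e2 nthB2 //; apply/andP; split; lia.
Qed.

Section A.
Variables (a a0 a1 : seq nat) (m : nat).
Hypotheses (ea1 : a = 0 :: a1) (ea0 : a = a0 ++ [:: 0; 1]) (hm : size a <= m).
Let w1 := a ++ nseq m 1.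
Let w2 := nseq m 1 ++ a.

Lemma sza : size a = size a0 + 2.
Proof. by rewrite ea0 size_cat. Qed.

Lemma w1_0 : nth 0 w1 0 = 0.
Proof. by rewrite /w1 ea1. Qed.

Lemma w1_l2 : nth 0 w1 (size a - 2) = 0.
Proof.
have sa := sza; rewrite /w1 nth_cat.
have -> : size a - 2 < size a by lia.
by rewrite sa addnK ea0 nth_cat ltnn subnn.
Qed.

Lemma w1_1 j : size a - 1 <= j < size a + m -> nth 0 w1 j = 1.
Proof.
move=> /andP [h1 h2]; rewrite /w1 nth_cat.
case: ltnP => hj.
  have -> : j = size a0 + 1 by rewrite sza in h1 hj; lia.
  by rewrite ea0 nth_cat ltnNge leq_addr /= addKn.
by rewrite nth_nseq; case: ifP => //; lia.
Qed.

Lemma w2_1 j : j < m -> nth 0 w2 j = 1.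
Proof. by move=> h; rewrite /w2 nth_cat size_nseq h nth_nseq h. Qed.

Lemma w2_m : nth 0 w2 m = 0.
Proof. by rewrite /w2 nth_cat size_nseq ltnn subnn ea1. Qed.

Lemma w2_l2 : nth 0 w2 (m + size a - 2) = 0.
Proof.
rewrite /w2 nth_cat size_nseq sza.
have -> : (m + (size a0 + 2) - 2 < m) = false by lia.
have -> : m + (size a0 + 2) - 2 - m = size a0 by lia.
by rewrite ea0 nth_cat ltnn subnn.
Qed.

Lemma szw1 : size w1 = size a + m. Proof. by rewrite /w1 size_cat size_nseq. Qed.
Lemma szw2 : size w2 = size a + m. Proof. by rewrite /w2 size_cat size_nseq addnC. Qed.

Lemma disjT (f : nat -> nat) s s' :
  (forall i, i < size w1 -> f (s + i.+1) = nth 0 w1 i) ->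
  (forall i, i < size w1 -> f (s' + i.+1) = nth 0 w1 i) ->
  s < s' -> s' < s + (size a + m) -> False.
Proof.
move=> hs hs' h1 h2; have sa := sza; have s1 := szw1.
have e0 : f s'.+1 = 0 by rewrite -addn1 hs' ?w1_0 //; lia.
have e1 : f s'.+1 = nth 0 w1 (s' - s) by rewrite -hs; [congr f; lia | lia].
have hi : s' - s < size a - 1.
  rewrite ltnNge; apply/negP => hh.
  by move: e1; rewrite e0 w1_1 //; apply/andP; split; lia.
have e2 : f (s' + (size a - 2).+1) = 0 by rewrite hs' ?w1_l2 //; lia.
have e3 : f (s' + (size a - 2).+1) = nth 0 w1 (s' - s + (size a - 2)).
  by rewrite -hs; [congr f; lia | lia].
by move: e3; rewrite e2 w1_1 //; apply/andP; split; lia.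
Qed.

Lemma disjE (f : nat -> nat) s s' :
  (forall i, i < size w2 -> f (s + i.+1) = nth 0 w2 i) ->
  (forall i, i < size w2 -> f (s' + i.+1) = nth 0 w2 i) ->
  s < s' -> s' < s + (size a + m - 1) -> False.
Proof.
move=> hs hs' h1 h2; have sa := sza; have s1 := szw2.
have e0 : f (s + (m + size a - 2).+1) = 0 by rewrite hs ?w2_l2 //; lia.
have e1 : f (s + (m + size a - 2).+1) = nth 0 w2 (m + size a - 2 - (s' - s)).
  by rewrite -hs'; [congr f; lia | lia].
have hi : m <= m + size a - 2 - (s' - s).
  rewrite leqNgt; apply/negP => hh.
  by move: e1; rewrite e0 w2_1.
have e2 : f (s + m.+1) = 0 by rewrite hs ?w2_m //; lia.
have e3 : f (s + m.+1) = nth 0 w2 (m - (s' - s)).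
  by rewrite -hs'; [congr f; lia | lia].
by move: e3; rewrite e2 w2_1 //; lia.
Qed.

Lemma disjQE (f : nat -> nat) s t :
  (forall i, i < size w1 -> f (s + i.+1) = nth 0 w1 i) ->
  (forall i, i < size w2 -> f (t + i.+1) = nth 0 w2 i) ->
  t < s + size a <= t + (size a + m - 1) -> False.
Proof.
move=> hs ht /andP [h1 h2]; have sa := sza; have s1 := szw1; have s2 := szw2.
have one : forall x, s + size a <= x <= s + size a + m -> f x = 1.
  move=> x /andP [hx1 hx2].
  have -> : x = s + (x - s - 1).+1 by lia.
  rewrite hs; [apply: w1_1; apply/andP; split; lia | lia].
case: (leqP (s + size a - t - 1) m) => hj.
- have e : f (t + m.+1) = 0 by rewrite ht ?w2_m //; lia.
  by rewrite one in e => //; apply/andP; split; lia.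
- have e : f (t + (m + size a - 2).+1) = 0 by rewrite ht ?w2_l2 //; lia.
  by rewrite one in e => //; apply/andP; split; lia.
Qed.

End A.

Arguments cover {n p L W w M v w0 u}.

Lemma inJ n p L W (w0 : 'I_n.+1 * 'I_n.+1) : w0 \in Jset n p L W ->
  exists u, [/\ u \in Iset n p L W, matches p (val u.1, val u.2) L W,
     u.1 < w0.1 <= u.1 + L & u.2 < w0.2 <= u.2 + L].
Proof.
rewrite inE => /existsP [u /andP [hu /andP [h1 h2]]]; exists u; split => //.
by move: hu; rewrite inE => /and3P [].
Qed.

Lemma const_contra n p L c (w0 : 'I_n.+1 * 'I_n.+1) (u : 'I_n.+1 * 'I_n.+1) :
  matches p (val u.1, val u.2) L [:: nseq L c] ->
  u.1 < w0.1 <= u.1 + L -> u.2 < w0.2 <= u.2 + L -> p w0.1 w0.2 = c.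
Proof.
move=> /matches1P [_ h]; case: u h => u1 u2 h /= hx hy.
have := h (w0.1 - u1 - 1) (w0.2 - u2 - 1); rewrite /= nth_nseq.
have -> : w0.1 - u1 - 1 < L by lia.
have -> : u1 + (w0.1 - u1 - 1).+1 = w0.1 by lia.
have -> : u2 + (w0.2 - u2 - 1).+1 = w0.2 by lia.
move=> ->; lia; lia.
Qed.
Arguments const_contra {n p L c w0 u}.

Lemma part1 N N' n p k2 (hN : forall j, 1 <= j -> 4 <= N j) (hN'2 : 1 <= N' k2.+2)
  (hn : ell' N N' k2.+2 <= n) (hodd : odd k2.+1) :
  (N k2.+1 - 1) * ell N k2 * #|Kset n p (ell' N N' k2.+2) (Bt' N N' k2.+2)|
    <= count_mem 0 (wb N k2.+1) * #|Jset n p (ell' N N' k2.+2) (Bt' N N' k2.+2)|.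
Proof.
set L := ell' N N' k2.+2; set W := Bt' N N' k2.+2.
set v := wb N k2.+1; set b := wb N k2.
set beta := flatten (nseq (N' k2.+2) v).
have [sa2 sb2 _ _ [b1 eb1]] := words_facts N hN k2.
have [sa1 sb1 _ _ _] := words_facts N hN k2.+1.
have hNk := hN k2.+1 isT.
have ev : v = b ++ nseq ((N k2.+1 - 2) * ell N k2) 2 ++ b by rewrite /v wb_odd.
have hL : N' k2.+2 * size v = L by rewrite /L /ell' /= -/v sb1.
set C := copies n p L W beta (N' k2.+2) (size v).
have hv : forall j i, j < N' k2.+2 -> i < size v -> nth 0 beta (j * size v + i) = nth 0 v i.
  by move=> j i hj hi; rewrite nth_flat_nseq.
have CP := fun c => copy_prop n p L W beta (N' k2.+2) v c hn hL hv.
have hK : #|Kset n p L W| <= #|C| * count_mem 0 v.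
  apply: leq_trans _ (zero_count n C v); apply: subset_leq_card; apply/subsetP => w0.
  rewrite inE => /andP [/inJ [u [hu hm hx hy]] /eqP hp0].
  move: hm; rewrite /W /Bt' matches_cons orbC => /orP [hm|hm].
    by move: hp0; rewrite (const_contra hm hx hy).
  have [[x y] [i [hc hi ew]]] := cover hn hL hu hm hx hy.
  have [hc1 hrow _] := CP _ hc; rewrite /= in hc1 hrow.
  move: hp0; rewrite ew /gpt /= inordK; last lia.
  rewrite hrow // => hp0.
  apply/imsetP; exists ((x, y), Ordinal hi); last by [].
  rewrite in_setX; apply/andP; split; first exact: hc.
  by rewrite inE /= hp0.
have hJ : #|C| * (size v - size b) <= #|Jset n p L W|.
  have hsz : size v = size b + (N k2.+1 - 2) * ell N k2 + size b.
    by rewrite ev !size_cat size_nseq addnA.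
  rewrite -(inj_count n C (size v - size b)).
  - apply: subset_leq_card; apply/subsetP => w0 /imsetP [[c i]].
    rewrite in_setX /= => /andP [hc _] ->.
    have [_ _ hJ] := CP c hc; rewrite /gpt /=; apply: hJ; have := ltn_ord i; lia.
  - by move=> c hc; have [h1 _ _] := CP c hc; lia.
  - move=> [x y] [x' y'] hc hc' /= e; subst y'.
    have [_ r1 _] := CP _ hc; have [_ r2 _] := CP _ hc'.
    rewrite /= in r1 r2.
    move=> h1 h2; apply: (disjB b ((N k2.+1 - 2) * ell N k2) (p^~ y) x x' _ _ _ _ _ h1).
    + by rewrite /b eb1.
    + by rewrite /b eb1.
    + rewrite /b sb2; apply: leq_pmull; lia.
    + by rewrite -ev.
    + by rewrite -ev.
    + lia.
have hsz : size v - size b = (N k2.+1 - 1) * ell N k2.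
  by rewrite sb1 sb2 /= mulnBl mul1n.
rewrite hsz in hJ.
apply: leq_trans (leq_mul (leqnn _) hK) _.
rewrite mulnA (mulnC _ #|C|) mulnC; exact: leq_mul (leqnn _) hJ.
Qed.

Lemma part2 N N' n p k2 (hN : forall j, 1 <= j -> 4 <= N j) (hN'2 : 2 <= N' k2.+2)
  (hn : ell' N N' k2.+2 <= n) :
  ell' N N' k2.+2 * #|Kset n p (ell' N N' k2.+2) (At' N N' k2.+2)|
    <= 2 * count_mem 0 (wa N k2.+1) * #|Jset n p (ell' N N' k2.+2) (At' N N' k2.+2)|.
Proof.
set L := ell' N N' k2.+2; set W := At' N N' k2.+2.
set a := wa N k2.+1; set l := ell N k2.+1.
have [sa1 _ [a1 ea1] [a0 ea0] _] := words_facts N hN k2.+1.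
rewrite -/a -/l in sa1 ea1 ea0.
set m := (N' k2.+2 - 1) * l.
have hm : size a <= m by rewrite sa1 /m leq_pmull //; lia.
set w1 := a ++ nseq m 1; set w2 := nseq m 1 ++ a.
have sw1 : size w1 = L.
  rewrite /w1 size_cat size_nseq sa1 /L /ell' /= -/l /m.
  rewrite -[in RHS](subnK (_ : 1 <= N' k2.+2)); last lia.
  by rewrite mulnDl mul1n addnC.
have sw2 : size w2 = L by rewrite /w2 size_cat size_nseq addnC -sw1 /w1 size_cat size_nseq.
have hl2 : 2 <= size a by rewrite ea0 size_cat addn2.
have sz1 : size w1 = size a + m by rewrite /w1 size_cat size_nseq.
have sz2 : size w2 = size a + m by rewrite /w2 size_cat size_nseq addnC.
have hL1 : forall w : seq nat, size w = L -> 1 * size w = L by move=> w ->; rewrite mul1n.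
have hv1 : forall w : seq nat, forall j i, j < 1 -> i < size w -> nth 0 w (j * size w + i) = nth 0 w i.
  by move=> w [|j] i.
set P1 := copies n p L W w1 1 (size w1).
set P2 := copies n p L W w2 1 (size w2).
have CP1 := fun c => copy_prop n p L W w1 1 w1 c hn (hL1 _ sw1) (hv1 w1).
have CP2 := fun c => copy_prop n p L W w2 1 w2 c hn (hL1 _ sw2) (hv1 w2).
have z1 : count_mem 0 w1 = count_mem 0 a.
  by rewrite /w1 count_cat count_nseq /= addn0.
have z2 : count_mem 0 w2 = count_mem 0 a.
  by rewrite /w2 count_cat count_nseq /= add0n.
have hK : #|Kset n p L W| <= #|P1| * count_mem 0 a + #|P2| * count_mem 0 a.
  rewrite -{1}z1 -z2.
  apply: leq_trans _ (leq_add (zero_count n P1 w1) (zero_count n P2 w2)).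
  apply: leq_trans _ (leq_card_setU _ _).
  apply: subset_leq_card; apply/subsetP => w0.
  rewrite inE => /andP [/inJ [u [hu hm0 hx hy]] /eqP hp0].
  move: hm0; rewrite /W /At' matches3 => /or3P [hm0|hm0|hm0].
  - have [[x y] [i [hc hi ew]]] := cover hn (hL1 _ sw1) hu hm0 hx hy.
    have [hc1 hrow _] := CP1 _ hc; rewrite /= in hc1 hrow.
    move: hp0; rewrite ew /gpt /= inordK; last lia.
    rewrite hrow // => hp0.
    rewrite inE; apply/orP; left.
    apply/imsetP; exists ((x, y), Ordinal hi); last by [].
    rewrite in_setX; apply/andP; split; first exact: hc.
    by rewrite inE /= hp0.
  - have [[x y] [i [hc hi ew]]] := cover hn (hL1 _ sw2) hu hm0 hx hy.
    have [hc1 hrow _] := CP2 _ hc; rewrite /= in hc1 hrow.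
    move: hp0; rewrite ew /gpt /= inordK; last lia.
    rewrite hrow // => hp0.
    rewrite inE; apply/orP; right.
    apply/imsetP; exists ((x, y), Ordinal hi); last by [].
    rewrite in_setX; apply/andP; split; first exact: hc.
    by rewrite inE /= hp0.
  - by move: hp0; rewrite (const_contra hm0 hx hy).
have hT : #|P1| * L <= #|Jset n p L W|.
  rewrite -{1}sw1 -(inj_count n P1 (size w1)).
  - apply: subset_leq_card; apply/subsetP => w0 /imsetP [[c i]].
    rewrite in_setX /= => /andP [hc _] ->.
    have [_ _ hJ] := CP1 c hc; rewrite /gpt /=; apply: hJ; exact: ltn_ord.
  - by move=> c hc; have [h1 _ _] := CP1 c hc.
  - move=> [x y] [x' y'] hc hc' /= e; subst y'.
    have [_ r1 _] := CP1 _ hc; have [_ r2 _] := CP1 _ hc'.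
    rewrite /= in r1 r2.
    move=> h1 h2; apply: (disjT a a0 a1 m ea1 ea0 hm (p^~ y) x x' r1 r2 h1).
    by move: h2; rewrite /w1 size_cat size_nseq.
set A := [set gpt (ci.1, val ci.2) | ci in setX P2 [set: 'I_(size w2 - 1)]].
set Q := [set ((inord (c.1 + size a) : 'I_n.+1), c.2) | c : 'I_n.+1 * 'I_n.+1 in P1].
have hA : #|A| = #|P2| * (size w2 - 1).
  apply: inj_count.
  - by move=> c hc; have [h1 _ _] := CP2 c hc; lia.
  - move=> [x y] [x' y'] hc hc' /= e; subst y'.
    have [_ r1 _] := CP2 _ hc; have [_ r2 _] := CP2 _ hc'.
    rewrite /= in r1 r2.
    move=> h1 h2; apply: (disjE a a0 a1 m ea1 ea0 hm (p^~ y) x x' r1 r2 h1).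
    lia.
have hQ : #|Q| = #|P1|.
  apply: card_in_imset => [[x y]] [x' y'] hc hc' [e1 e2]; subst y'.
  have [h1 _ _] := CP1 _ hc; have [h2 _ _] := CP1 _ hc'; rewrite /= in h1 h2.
  have := congr1 val e1; rewrite /= !inordK; [|lia|lia] => e.
  by congr pair; apply: val_inj => /=; lia.
have hAQ : A :&: Q = set0.
  apply/setP => w0; rewrite !inE; apply/negP => /andP [/imsetP [[c i]] ] .
  rewrite in_setX /= => /andP [hc _] -> /imsetP [c' hc'] [e1 e2].
  case: c hc e1 e2 => x y hc; case: c' hc' => x' y' hc' /= e1 e2; subst y'.
  have [h1 r1 _] := CP2 _ hc; have [h2 r2 _] := CP1 _ hc'; rewrite /= in h1 h2 r1 r2.
  have hi := ltn_ord i.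
  have := congr1 val e1; rewrite /= !inordK; [|lia|lia] => e.
  apply: (disjQE a a0 a1 m ea1 ea0 hm (p^~ y) x' x r2 r1).
  lia.
have hEQ : #|P2| * (L - 1) + #|P1| <= #|Jset n p L W|.
  have hU : #|A :|: Q| = #|A| + #|Q| by rewrite -cardsUI hAQ cards0 addn0.
  rewrite -{1}sw2 -hA -hQ -hU.
  apply: subset_leq_card; apply/subsetP => w0; rewrite inE => /orP [].
  - move=> /imsetP [[c i]]; rewrite in_setX /= => /andP [hc _] ->.
    have [_ _ hJ] := CP2 c hc; rewrite /gpt /=; apply: hJ.
    have := ltn_ord i; lia.
  - move=> /imsetP [c hc ->].
    have [_ _ hJ] := CP1 c hc.
    have := hJ (size a).-1; rewrite prednK; last lia.
    apply; rewrite sw1 -sw1 /w1 size_cat; lia.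
have hL2 : 2 <= L by rewrite -sw1 /w1 size_cat; lia.
set z := count_mem 0 a.
have key : L * (#|P1| + #|P2|) <= 2 * #|Jset n p L W|.
  move: hT hEQ hL2; set X1 := #|P1|; set X2 := #|P2|; set J := #|Jset n p L W|.
  move=> hT hEQ hL2.
  case: (leqP X2 X1) => h.
  - have : L * X2 <= L * X1 by rewrite leq_mul2l h orbT.
    lia.
  - have : (L - 2) * X1 <= (L - 2) * X2 by rewrite leq_mul2l ltnW ?orbT.
    have e1 : X2 * (L - 1) = X2 * L - X2 by rewrite mulnBr muln1.
    have e2 : (L - 2) * X1 = L * X1 - 2 * X1 by rewrite mulnBl.
    have e3 : (L - 2) * X2 = L * X2 - 2 * X2 by rewrite mulnBl.
    have : X2 <= X2 * L by rewrite leq_pmulr; lia.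
    have : 2 * X1 <= L * X1 by rewrite leq_mul2r hL2 orbT.
    have : 2 * X2 <= L * X2 by rewrite leq_mul2r hL2 orbT.
    rewrite mulnDr (mulnC X2 L) in e1 *; lia.
apply: leq_trans (leq_mul (leqnn L) hK) _.
rewrite -mulnDl mulnA -mulnA (mulnC 2 z) -mulnA mulnC.
  rewrite -/z mulnAC (mulnC _ L) mulnC; exact: leq_mul (leqnn z) key.
Qed.

Section Fin.
Local Open Scope ring_scope.
Lemma fin1 (Nk l2 z Kc Jc : nat) : (4 <= Nk)%N -> (0 < l2)%N -> ((Nk - 1) * l2 * Kc <= z * Jc)%N ->
  ((Kc%:R : rat) <= (1 - (Nk%:R)^-1)^-1 * Jc%:R * (z%:R / (Nk * l2)%:R))%R.
Proof.
move=> hN hl h.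
have hN1 : (Nk%:R : rat) - 1 != 0.
  by rewrite subr_eq0 pnatr_eq1; lia.
have hN0 : (Nk%:R : rat) != 0 by rewrite pnatr_eq0; lia.
have hl0 : (l2%:R : rat) != 0 by rewrite pnatr_eq0; lia.
have -> : (1 - (Nk%:R)^-1)^-1 * Jc%:R * (z%:R / (Nk * l2)%:R)
    = (z * Jc)%:R / ((Nk - 1) * l2)%:R :> rat.
  rewrite !natrM natrB; last lia.
  field; rewrite ?hN1 ?hN0 ?hl0 //.
rewrite ler_pdivlMr; last by rewrite ltr0n; nia.
by rewrite -natrM ler_nat mulnC.
Qed.

Lemma fin2 (N' l z Kc Jc : nat) : (0 < N')%N -> (0 < l)%N -> (N' * l * Kc <= 2 * z * Jc)%N ->
  ((Kc%:R : rat) <= (2 / N'%:R) * Jc%:R * (z%:R / l%:R))%R.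
Proof.
move=> hN hl h.
have hN0 : (N'%:R : rat) != 0 by rewrite pnatr_eq0; lia.
have hl0 : (l%:R : rat) != 0 by rewrite pnatr_eq0; lia.
have -> : (2 / N'%:R) * Jc%:R * (z%:R / l%:R) = (2 * z * Jc)%:R / (N' * l)%:R :> rat.
  rewrite !natrM; field; by rewrite ?hN0 ?hl0.
rewrite ler_pdivlMr; last by rewrite ltr0n; nia.
by rewrite -natrM ler_nat mulnC.
Qed.
End Fin.

Theorem lemma3p6 (N N' : nat -> nat)
  (hN : forall j, 1 <= j -> 4 <= N j)
  (hN' : forall j, 1 <= j -> [/\ 2 <= N' j, N' j %| N j & 2 <= N j %/ N' j])
  (k n : nat) (p : nat -> nat -> nat)
  (hk : 2 <= k) (hkeven : ~~ odd k)
  (hn : 2 * ell' N N' k < n)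
  (hp : forall x y, 1 <= x <= n -> 1 <= y <= n -> p x y <= 2) :
  ((#|Kset n p (ell' N N' k) (Bt' N N' k)|%:R : rat)
     <= (1 - ((N k.-1)%:R)^-1)^-1
        * (#|Jset n p (ell' N N' k) (Bt' N N' k)|%:R) * fB N k.-1)%R
  /\
  ((#|Kset n p (ell' N N' k) (At' N N' k)|%:R : rat)
     <= (2 / (N' k)%:R) * (#|Jset n p (ell' N N' k) (At' N N' k)|%:R)
        * fA N k.-1)%R.
Proof.
case: k hk hkeven hn => [|[|k2]] // _ hkeven hn.
have hodd : odd k2.+1 by move: hkeven; rewrite /= negbK.
have [hN'2 _ _] := hN' k2.+2 isT.
have hLn : ell' N N' k2.+2 <= n by lia.
have [_ sb2 _ _ [b1 eb1]] := words_facts N hN k2.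
have hl2 : 0 < ell N k2 by rewrite -sb2 eb1.
have [sa1 _ [a1 ea1] _ _] := words_facts N hN k2.+1.
have hl1 : 0 < ell N k2.+1 by rewrite -sa1 ea1.
split.
- rewrite /fB /=.
  apply: fin1; [exact: (hN k2.+1 isT) | exact: hl2 | exact: (part1 N N' n p k2 hN (ltnW hN'2) hLn hodd)].
- rewrite /fA /=.
  apply: fin2; [lia | exact: hl1 | exact: (part2 N N' n p k2 hN hN'2 hLn)].
Qed.
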